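(* Let $|\psi\rangle,|\phi\rangle,|e\rangle,|f\rangle$ be unit vectors in $\mathbb{C}^2$ and let $\mathcal{R}$ be the set of random unitary channels on $\mathcal{L}(\mathbb{C}^2)$. Then $$\max_{\Psi\in\mathcal{R}}\left\{\frac12\langle e|\Psi(|\psi\rangle\langle\psi|)|e\rangle+\frac12\langle f|\Psi(|\phi\rangle\langle\phi|)|f\rangle\right\}=\frac12\left(1+|\langle\psi|\phi\rangle||\langle e|f\rangle|+\sqrt{(1-|\langle\psi|\phi\rangle|^2)(1-|\langle e|f\rangle|^2)}\right).$$ The right-hand side equals $1$ if and only if $|\langle\psi|\phi\rangle|=|\langle e|f\rangle|$; consequently, $(|\psi\rangle,|\phi\rangle)$ is jointly convertible into $(|e\rangle,|f\rangle)$ within $\mathcal{R}$ if and only if $|\langle\psi|\phi\rangle|=|\langle e|f\rangle|$.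
   Context: $\mathcal{R}$ consists of the maps $A\mapsto\sum_xp_xU_xAU_x^\dagger$ with $\{p_x\}$ a finite probability distribution and $U_x$ unitary operators on $\mathbb{C}^2$. For a set $\mathcal{X}$ of quantum channels, $(|\psi\rangle,|\phi\rangle)$ is jointly convertible into $(|e\rangle,|f\rangle)$ within $\mathcal{X}$ if there exists $\Psi\in\mathcal{X}$ with $\Psi(|\psi\rangle\langle\psi|)=|e\rangle\langle e|$ and $\Psi(|\phi\rangle\langle\phi|)=|f\rangle\langle f|$. *)

(* Defs.v *)
From mathcomp Require Import all_boot all_algebra spectral.
From mathcomp Require Import reals.
From mathcomp.real_closed Require Export complex.
Export GRing.Theory Num.Theory Num.Def.
Set Implicit Arguments. Unset Strict Implicit. Unset Printing Implicit Defensive.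
Local Open Scope ring_scope.
Local Open Scope sesquilinear_scope.

Section Qubit.
Variable R : realType.
Local Notation C := (R[i]).

Definition braket (u v : 'cV[C]_2) : C := (u ^t* *m v) 0 0.

Definition unit_vec (u : 'cV[C]_2) : Prop := braket u u = 1.

Definition ketbra (u : 'cV[C]_2) : 'M[C]_2 := u *m u ^t*.

Definition expect (u : 'cV[C]_2) (A : 'M[C]_2) : C := (u ^t* *m A *m u) 0 0.

Definition random_unitary_channel (Psi : 'M[C]_2 -> 'M[C]_2) : Prop :=
  exists (n : nat) (p : 'I_n -> C) (U : 'I_n -> 'M[C]_2),
    [/\ (forall x, 0 <= p x),
        \sum_(x < n) p x = 1,
        (forall x, U x \is unitarymx) &
        (forall A, Psi A = \sum_(x < n) p x *: (U x *m A *m (U x) ^t*))].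

Definition jointly_convertible (X : ('M[C]_2 -> 'M[C]_2) -> Prop)
  (psi phi e f : 'cV[C]_2) : Prop :=
  exists Psi, X Psi /\ Psi (ketbra psi) = ketbra e /\ Psi (ketbra phi) = ketbra f.

Definition success (Psi : 'M[C]_2 -> 'M[C]_2) (psi phi e f : 'cV[C]_2) : C :=
  2^-1 * expect e (Psi (ketbra psi)) + 2^-1 * expect f (Psi (ketbra phi)).

Definition opt_value (psi phi e f : 'cV[C]_2) : C :=
  2^-1 * (1 + `|braket psi phi| * `|braket e f|
          + sqrtC ((1 - `|braket psi phi| ^+ 2) * (1 - `|braket e f| ^+ 2))).

End Qubit.

(* Main.v *)
Require Import Defs.
From mathcomp Require Import all_boot all_order all_algebra spectral reals.
From mathcomp Require Import ring lra.
Set Implicit Arguments. Unset Strict Implicit. Unset Printing Implicit Defensive.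
Import Order.TTheory GRing.Theory Num.Theory Num.Def.
Local Open Scope complex_scope.
Local Open Scope ring_scope.
Local Open Scope sesquilinear_scope.

Section S.
Variable R : realType.
Local Notation C := (R[i]).
Implicit Types (u v w : 'cV[C]_2) (A B M : 'M[C]_2).

Lemma adjM m n p (A : 'M[C]_(m,n)) (B : 'M[C]_(n,p)) : (A *m B)^t* = B^t* *m A^t*.
Proof. by rewrite trmx_mul map_mxM. Qed.

Lemma adjD m n (A B : 'M[C]_(m,n)) : (A + B)^t* = A^t* + B^t*.
Proof. by rewrite linearD /= map_mxD. Qed.

Lemma adjZ m n a (A : 'M[C]_(m,n)) : (a *: A)^t* = a^* *: A^t*.
Proof. by rewrite linearZ /= map_mxZ. Qed.

Lemma adj1 : (1%:M : 'M[C]_2)^t* = 1%:M.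
Proof. by rewrite trmx1 map_mx1. Qed.

Lemma tr_adj (A : 'M[C]_2) : \tr (A^t*) = (\tr A)^*.
Proof. by rewrite /mxtrace rmorph_sum; apply: eq_bigr => i _; rewrite !mxE. Qed.

Lemma tr11 (A : 'M[C]_1) : \tr A = A 0 0.
Proof. by rewrite /mxtrace big_ord1. Qed.

Lemma mx11 (A : 'M[C]_1) : A = (A 0 0)%:M.
Proof. by apply/matrixP=> i j; rewrite !ord1 !mxE eqxx mulr1n. Qed.

Lemma braketE u v : braket u v = (u 0 0)^* * v 0 0 + (u 1 0)^* * v 1 0.
Proof.
rewrite /braket mxE !big_ord_recl big_ord0 addr0 !mxE.
by have -> : lift ord0 ord0 = 1 :> 'I_2 by apply: val_inj.
Qed.

Lemma braketC u v : (braket u v)^* = braket v u.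
Proof. by rewrite !braketE rmorphD !rmorphM /= !conjCK; ring. Qed.

Lemma braketZl a u v : braket (a *: u) v = a^* * braket u v.
Proof. by rewrite !braketE !mxE !rmorphM /=; ring. Qed.

Lemma braketZr a u v : braket u (a *: v) = a * braket u v.
Proof. by rewrite !braketE !mxE; ring. Qed.

Lemma braketDl u v w : braket (u + v) w = braket u w + braket v w.
Proof. by rewrite !braketE !mxE !rmorphD /=; ring. Qed.

Lemma braketDr u v w : braket u (v + w) = braket u v + braket u w.
Proof. by rewrite !braketE !mxE; ring. Qed.

Lemma braketNl u v : braket (- u) v = - braket u v.
Proof. by rewrite !braketE !mxE !rmorphN /=; ring. Qed.

Lemma braketNr u v : braket u (- v) = - braket u v.
Proof. by rewrite !braketE !mxE; ring. Qed.

Lemma braket_ge0 u : 0 <= braket u u.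
Proof. by rewrite braketE addr_ge0 // mulrC mul_conjC_ge0. Qed.

Lemma braket_eq0 u : braket u u = 0 -> u = 0.
Proof.
rewrite braketE => /eqP; rewrite paddr_eq0 ?[_ * u _ _]mulrC ?mul_conjC_ge0 //.
rewrite !mul_conjC_eq0 => /andP[/eqP h0 /eqP h1].
apply/matrixP=> i j; rewrite !ord1 mxE.
case: i => [[|[|//]]] Hi.
  by rewrite -h0; congr (u _ _); apply: val_inj.
by rewrite -h1; congr (u _ _); apply: val_inj.
Qed.


Lemma bra_ket u v : u^t* *m v = (braket u v)%:M.
Proof. exact: mx11. Qed.

Lemma expect_tr u A : expect u A = \tr (A *m ketbra u).
Proof. by rewrite /expect -tr11 -mulmxA mxtrace_mulC /ketbra mulmxA. Qed.

Lemma tr_k u : \tr (ketbra u) = braket u u.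
Proof. by rewrite /ketbra mxtrace_mulC tr11. Qed.

Lemma kk u v : ketbra u *m ketbra v = braket u v *: (u *m v^t*).
Proof.
by rewrite /ketbra mulmxA -[u *m _ *m v]mulmxA bra_ket mul_mx_scalar scalemxAl.
Qed.

Lemma tr_kk u v : \tr (ketbra u *m ketbra v) = `|braket u v|^+2.
Proof.
rewrite kk mxtraceZ mxtrace_mulC tr11.
change ((v^t* *m u) 0 0) with (braket v u).
by rewrite -(braketC u v) normCK.
Qed.

Lemma kk_idem u : unit_vec u -> ketbra u *m ketbra u = ketbra u.
Proof. by rewrite /unit_vec kk => ->; rewrite scale1r. Qed.

Lemma adj_k u : (ketbra u)^t* = ketbra u.
Proof. by rewrite /ketbra adjM trmxCK. Qed.

Lemma conj_k (U : 'M[C]_2) u : U *m ketbra u *m U^t* = ketbra (U *m u).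
Proof. by rewrite /ketbra adjM !mulmxA. Qed.

Lemma braket_U (U : 'M[C]_2) u v : U^t* *m U = 1%:M -> braket (U *m u) (U *m v) = braket u v.
Proof.
by move=> H; rewrite /braket adjM -!mulmxA [U^t* *m (U *m v)]mulmxA H mul1mx.
Qed.

Lemma ketbraZ a u : ketbra (a *: u) = (a * a^*) *: ketbra u.
Proof. by rewrite /ketbra adjZ -scalemxAl -scalemxAr scalerA. Qed.

Lemma expectZ a u A : expect (a *: u) A = (a * a^*) * expect u A.
Proof.
rewrite /expect adjZ -!scalemxAl -scalemxAr.
by rewrite !mxE mulrA [conjC a * a]mulrC.
Qed.

Lemma expect_k e v : expect e (ketbra v) = `|braket e v|^+2.
Proof. by rewrite expect_tr mxtrace_mulC tr_kk. Qed.


Lemma trH A B : A^t* = A -> B^t* = B -> (\tr (A *m B))^* = \tr (A *m B).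
Proof. by move=> HA HB; rewrite -tr_adj adjM HA HB mxtrace_mulC. Qed.

Lemma trAA_ge0 A : A^t* = A -> 0 <= \tr (A *m A).
Proof.
move=> HA; rewrite -{2}HA /mxtrace sumr_ge0 // => i _; rewrite mxE sumr_ge0 // => j _.
by rewrite !mxE mul_conjC_ge0.
Qed.

Lemma realC (x : C) : x^* = x -> x = (complex.Re x)%:C.
Proof.
case: x => a b /= [] Hb.
have -> : b = 0 by apply/eqP; rewrite -[b == 0](@mulrn_eq0 _ _ 2) mulr2n -{1}Hb addNr.
by [].
Qed.

Lemma conjR (x : R) : (x%:C)^* = x%:C.
Proof. exact: conjc_real. Qed.

Definition T A B : R := complex.Re (\tr (A *m B)).

Lemma TE A B : A^t* = A -> B^t* = B -> \tr (A *m B) = (T A B)%:C.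
Proof. by move=> HA HB; apply: realC; apply: trH. Qed.

Lemma TC A B : T A B = T B A.
Proof. by rewrite /T mxtrace_mulC. Qed.

Lemma tr_sc (a b : C) (X Y : 'M[C]_2) : \tr ((a *: X) *m (b *: Y)) = a * b * \tr (X *m Y).
Proof. by rewrite -scalemxAl -scalemxAr !mxtraceZ mulrA. Qed.

Lemma quad A B (l m : R) : A^t* = A -> B^t* = B ->
  0 <= l * l * T A A - 2 * l * m * T A B + m * m * T B B.
Proof.
move=> HA HB.
pose M := l%:C *: A - m%:C *: B.
have HM : M^t* = M.
  by rewrite /M adjD adjZ linearN /= map_mxN adjZ HA HB !conjR.
have := trAA_ge0 HM.
rewrite /M mulmxDl !mulmxDr !mulmxN !mulNmx !mxtraceD !raddfN /= !tr_sc.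
rewrite (TE HA HA) (TE HA HB) (TE HB HA) (TE HB HB) (TC B A) => H.
set t := T A A; set c := T A B; set s := T B B.
have E : (l * l * t - 2 * l * m * c + m * m * s)%:C =
  l%:C * l%:C * t%:C - l%:C * m%:C * c%:C +
    (- (m%:C * l%:C * c%:C) - - (m%:C * m%:C * s%:C)).
  rewrite !rmorphD !rmorphN !rmorphM rmorph_nat /=.
  ring.
by rewrite -ler0c E.
Qed.


Lemma ReD (x y : C) : complex.Re (x + y) = complex.Re x + complex.Re y.
Proof. by case: x; case: y. Qed.
Lemma ReN (x : C) : complex.Re (- x) = - complex.Re x.
Proof. by case: x. Qed.
Lemma ReR (x : R) : complex.Re (x%:C) = x.
Proof. by []. Qed.

Lemma TDl A B M : T (A + B) M = T A M + T B M.
Proof. by rewrite /T mulmxDl mxtraceD ReD. Qed.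
Lemma TDr A B M : T M (A + B) = T M A + T M B.
Proof. by rewrite /T mulmxDr mxtraceD ReD. Qed.
Lemma TNl A M : T (- A) M = - T A M.
Proof. by rewrite /T mulNmx raddfN /= ReN. Qed.
Lemma TNr A M : T M (- A) = - T M A.
Proof. by rewrite /T mulmxN raddfN /= ReN. Qed.

Lemma normRe (z : C) : `|z| = (complex.Re `|z|)%:C.
Proof. by apply: realC; rewrite conj_normC. Qed.

Lemma Re_norm_ge0 (z : C) : 0 <= complex.Re `|z|.
Proof. by rewrite -ler0c -normRe normr_ge0. Qed.

Lemma T_kk u v : T (ketbra u) (ketbra v) = (complex.Re `|braket u v|)^+2.
Proof. by rewrite /T tr_kk normRe -rmorphXn. Qed.

Lemma T_k1 u : unit_vec u -> T (ketbra u) 1%:M = 1.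
Proof. by rewrite /T mulmx1 tr_k => ->. Qed.

Lemma T_1k u : unit_vec u -> T 1%:M (ketbra u) = 1.
Proof. by rewrite /T mul1mx tr_k => ->. Qed.

Lemma T_11 : T 1%:M 1%:M = 2.
Proof. by rewrite /T mulmx1 mxtrace1. Qed.

Lemma Re_norm1 : complex.Re `|1 : C| = 1.
Proof. by rewrite normr1. Qed.

Lemma CS (t c s : R) : (forall l m, 0 <= l * l * t - 2 * l * m * c + m * m * s) ->
  c <= Num.sqrt t * Num.sqrt s.
Proof.
move=> H.
have t0 : 0 <= t by have := H 1 0; rewrite !mul1r !mulr0 !mul0r subr0 addr0.
have s0 : 0 <= s by have := H 0 1; rewrite !mulr0 !mul0r !mul1r sub0r oppr0 add0r.
have [c0|c0] := leP c 0.
  by rewrite (le_trans c0) // mulr_ge0 // sqrtr_ge0.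
have [t00|t00] := eqVneq t 0.
  have := H ((s + 1) / (2 * c)) 1.
  have -> : 2 * ((s + 1) / (2 * c)) * 1 * c = s + 1.
    by field; rewrite gt_eqF.
  rewrite t00 mulr0 mul1r sub0r; lra.
have tp : 0 < t by rewrite lt_def t00 t0.
have := H c t => Hc.
have cs : c ^+ 2 <= t * s.
  have : 0 <= t * (t * s - c ^+ 2) by move: Hc; rewrite expr2; nra.
  by rewrite pmulr_rge0 // subr_ge0.
rewrite -sqrtrM // -(ger0_norm (ltW c0)) -sqrtr_sqr.
by rewrite ler_wsqrtr.
Qed.

End S.

Section S.
Variable R : realType.
Local Notation C := (R[i]).
Implicit Types (u v w : 'cV[C]_2) (A B M : 'M[C]_2).

Definition herm A := A^t* = A.
Lemma herm_k u : herm (ketbra u). Proof. exact: adj_k. Qed.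
Lemma herm_1 : herm 1%:M. Proof. by rewrite /herm trmx1 map_mx1. Qed.
Lemma hermD A B : herm A -> herm B -> herm (A + B).
Proof. by rewrite /herm adjD => -> ->. Qed.
Lemma hermN A : herm A -> herm (- A).
Proof. by rewrite /herm linearN /= map_mxN => ->. Qed.

Lemma CS_T A B : herm A -> herm B -> T A B <= Num.sqrt (T A A) * Num.sqrt (T B B).
Proof. by move=> HA HB; apply: CS => l m; apply: quad. Qed.

Lemma TAA_ge0 A : herm A -> 0 <= T A A.
Proof. by move=> HA; have := quad 1 0 HA HA; rewrite !mul1r !mulr0 !mul0r subr0 addr0. Qed.

Lemma fin_real (a b p q r s : R) : 0 <= a -> 0 <= b ->
  p ^+ 2 + q ^+ 2 - 1 + (r ^+ 2 + s ^+ 2 - 1) + (-1 - 1 - -2) <=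
  Num.sqrt (1 ^+ 2 + b ^+ 2 - 1 + (b ^+ 2 + 1 ^+ 2 - 1) + (-1 - 1 - -2)) *
  Num.sqrt (1 ^+ 2 + a ^+ 2 - 1 + (a ^+ 2 + 1 ^+ 2 - 1) + (-1 - 1 - -2)) ->
  p ^+ 2 - q ^+ 2 + (- r ^+ 2 - - s ^+ 2) <=
  Num.sqrt (1 ^+ 2 - b ^+ 2 + (- b ^+ 2 - - 1 ^+ 2)) *
  Num.sqrt (1 ^+ 2 - a ^+ 2 + (- a ^+ 2 - - 1 ^+ 2)) ->
  0 <= 1 ^+ 2 - b ^+ 2 + (- b ^+ 2 - - 1 ^+ 2) ->
  0 <= 1 ^+ 2 - a ^+ 2 + (- a ^+ 2 - - 1 ^+ 2) ->
  [/\ a <= 1, b <= 1 &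
    p ^+ 2 + s ^+ 2 <= 1 + a * b + Num.sqrt ((1 - a ^+ 2) * (1 - b ^+ 2))].
Proof.
move=> a0 b0.
have ea : forall z : R, 1 ^+ 2 + z ^+ 2 - 1 + (z ^+ 2 + 1 ^+ 2 - 1) + (-1 - 1 - -2) = 2 * z ^+ 2.
  by move=> z; ring.
have eb : forall z : R, 1 ^+ 2 - z ^+ 2 + (- z ^+ 2 - - 1 ^+ 2) = 2 * (1 - z ^+ 2).
  by move=> z; ring.
rewrite !ea !eb => H1 H2 H3 H4.
have a1 : a <= 1 by nra.
have b1 : b <= 1 by nra.
split => //.
rewrite -sqrtrM ?mulr_ge0 ?sqr_ge0 // in H1.
rewrite (_ : 2 * b ^+ 2 * (2 * a ^+ 2) = (2 * a * b) ^+ 2) in H1; last by ring.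
rewrite sqrtr_sqr ger0_norm ?mulr_ge0 // in H1.
rewrite -sqrtrM // in H2.
rewrite (_ : 2 * (1 - b ^+ 2) * (2 * (1 - a ^+ 2)) = 2 ^+ 2 * ((1 - a ^+ 2) * (1 - b ^+ 2))) in H2; last by ring.
rewrite sqrtrM ?sqr_ge0 // sqrtr_sqr ger0_norm // in H2.
lra.
Qed.

Lemma pair_bound (x y e f : 'cV[C]_2) : unit_vec x -> unit_vec y -> unit_vec e -> unit_vec f ->
  [/\ complex.Re `|braket x y| <= 1, complex.Re `|braket e f| <= 1 &
  (complex.Re `|braket e x|)^+2 + (complex.Re `|braket f y|)^+2 <=
     1 + complex.Re `|braket x y| * complex.Re `|braket e f| +
     Num.sqrt ((1 - (complex.Re `|braket x y|)^+2) * (1 - (complex.Re `|braket e f|)^+2))].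
Proof.
rewrite /unit_vec => Ux Uy Ue Uf.
set a := complex.Re `|braket x y|; set b := complex.Re `|braket e f|.
have hx := herm_k x; have hy := herm_k y; have he := herm_k e; have hf := herm_k f.
have h1 := herm_1.
have hA1 := hermD (hermD he hf) (hermN h1).
have hB1 := hermD (hermD hx hy) (hermN h1).
have hA2 := hermD he (hermN hf).
have hB2 := hermD hx (hermN hy).
have c1 := CS_T hA1 hB1.
have c2 := CS_T hA2 hB2.
have tA2 := TAA_ge0 hA2.
have tB2 := TAA_ge0 hB2.
move: c1 c2 tA2 tB2.
rewrite !(TDl, TDr, TNl, TNr) !T_kk ?T_k1 ?T_1k ?T_11 //.
rewrite -(braketC e f) -(braketC x y) !norm_conjC Ux Uy Ue Uf Re_norm1 -/a -/b.
move=> H1 H2 H3 H4.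
have [] := fin_real (Re_norm_ge0 _) (Re_norm_ge0 _) H1 H2 H3 H4.
by [].
Qed.

End S.

Section S.
Variable R : realType.
Local Notation C := (R[i]).
Implicit Types (u v w : 'cV[C]_2) (A B M : 'M[C]_2).

Lemma success_chan n (p : 'I_n -> C) (U : 'I_n -> 'M[C]_2) (Psi : 'M[C]_2 -> 'M[C]_2)
    (psi phi e f : 'cV[C]_2) :
  (forall A, Psi A = \sum_(x < n) p x *: (U x *m A *m (U x)^t*)) ->
  success Psi psi phi e f = \sum_(x < n) p x *
     (2^-1 * `|braket e (U x *m psi)|^+2 + 2^-1 * `|braket f (U x *m phi)|^+2).
Proof.
move=> HPsi; rewrite /success !HPsi !expect_tr !mulmx_suml !linear_sum /=.
rewrite !mulr_sumr -big_split /=; apply: eq_bigr => x _.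
rewrite -!scalemxAl !mxtraceZ !conj_k -!expect_tr !expect_k.
ring.
Qed.

Lemma sqrtC_R (r : R) : 0 <= r -> sqrtC (r%:C) = (Num.sqrt r)%:C.
Proof. by move=> r0; rewrite -{1}(sqr_sqrtr r0) rmorphXn sqrCK // ler0c sqrtr_ge0. Qed.


Lemma term_bound (U : 'M[C]_2) (psi phi e f : 'cV[C]_2) :
  unit_vec psi -> unit_vec phi -> unit_vec e -> unit_vec f ->
  U *m U^t* = 1%:M ->
  2^-1 * `|braket e (U *m psi)|^+2 + 2^-1 * `|braket f (U *m phi)|^+2 <=
  opt_value psi phi e f.
Proof.
move=> Up Uph Ue Uf UU.
have UU' : U^t* *m U = 1%:M by apply: mulmx1C.
have Ux : unit_vec (U *m psi) by rewrite /unit_vec braket_U.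
have Uy : unit_vec (U *m phi) by rewrite /unit_vec braket_U.
have [a1 b1 H] := pair_bound Ux Uy Ue Uf.
rewrite braket_U // in a1 H.
rewrite /opt_value.
set a := complex.Re `|braket psi phi| in a1 H *.
set b := complex.Re `|braket e f| in b1 H *.
set p := complex.Re `|braket e (U *m psi)| in H *.
set s := complex.Re `|braket f (U *m phi)| in H *.
have a0 : 0 <= a by apply: Re_norm_ge0.
have b0 : 0 <= b by apply: Re_norm_ge0.
rewrite (normRe (braket psi phi)) (normRe (braket e f)) (normRe (braket e _)) (normRe (braket f _)) -/a -/b -/p -/s.
have E : (1 - a%:C ^+ 2) * (1 - b%:C ^+ 2) = ((1 - a ^+ 2) * (1 - b ^+ 2))%:C.
  by rewrite rmorphM !rmorphB rmorph1 !rmorphXn.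
rewrite E sqrtC_R; last by apply: mulr_ge0; rewrite subr_ge0 expr_le1.
have i2 : (2^-1 : C) = (2^-1 : R)%:C by rewrite fmorphV rmorph_nat.
have EL : 2^-1 * p%:C ^+ 2 + 2^-1 * s%:C ^+ 2 = (2^-1 * p ^+ 2 + 2^-1 * s ^+ 2)%:C.
  by rewrite !expr2 rmorphD !rmorphM i2.
have ER : 2^-1 * (1 + a%:C * b%:C + (Num.sqrt ((1 - a ^+ 2) * (1 - b ^+ 2)))%:C) =
   (2^-1 * (1 + a * b + Num.sqrt ((1 - a ^+ 2) * (1 - b ^+ 2))))%:C.
  by rewrite rmorphM !rmorphD rmorph1 rmorphM i2.
rewrite EL ER lecR.
lra.
Qed.


Lemma chan_bound (Psi : 'M[C]_2 -> 'M[C]_2) (psi phi e f : 'cV[C]_2) :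
  unit_vec psi -> unit_vec phi -> unit_vec e -> unit_vec f ->
  random_unitary_channel Psi -> success Psi psi phi e f <= opt_value psi phi e f.
Proof.
move=> Up Uph Ue Uf [n [p [U [p0 p1 Uu HPsi]]]].
rewrite (success_chan _ _ _ _ HPsi).
apply: (@le_trans _ _ (\sum_(x < n) p x * opt_value psi phi e f)).
  apply: ler_sum => x _; apply: ler_wpM2l => //.
  by apply: term_bound => //; apply/unitarymxP.
by rewrite -mulr_suml p1 mul1r.
Qed.

Lemma opt_R (psi phi e f : 'cV[C]_2) :
  unit_vec psi -> unit_vec phi -> unit_vec e -> unit_vec f ->
  let a := complex.Re `|braket psi phi| in let b := complex.Re `|braket e f| in
  [/\ 0 <= a, a <= 1, 0 <= b, b <= 1 &
   opt_value psi phi e f = (2^-1 * (1 + a * b + Num.sqrt ((1 - a ^+ 2) * (1 - b ^+ 2))))%:C].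
Proof.
move=> Up Uph Ue Uf a b.
have [a1 b1 _] := pair_bound Up Uph Ue Uf.
have a0 : 0 <= a by apply: Re_norm_ge0.
have b0 : 0 <= b by apply: Re_norm_ge0.
split => //.
rewrite /opt_value (normRe (braket psi phi)) (normRe (braket e f)) -/a -/b.
have E : (1 - a%:C ^+ 2) * (1 - b%:C ^+ 2) = ((1 - a ^+ 2) * (1 - b ^+ 2))%:C.
  by rewrite rmorphM !rmorphB rmorph1 !rmorphXn.
rewrite E sqrtC_R; last by apply: mulr_ge0; rewrite subr_ge0 expr_le1.
have i2 : (2^-1 : C) = (2^-1 : R)%:C by rewrite fmorphV rmorph_nat.
by rewrite rmorphM !rmorphD rmorph1 rmorphM i2.
Qed.

Lemma opt_eq1_R (a b : R) : 0 <= a -> a <= 1 -> 0 <= b -> b <= 1 ->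
  (2^-1 * (1 + a * b + Num.sqrt ((1 - a ^+ 2) * (1 - b ^+ 2))) = 1 <-> a = b).
Proof.
move=> a0 a1 b0 b1.
have X0 : 0 <= (1 - a ^+ 2) * (1 - b ^+ 2) by apply: mulr_ge0; rewrite subr_ge0 expr_le1.
split.
  move=> H.
  have Hs : Num.sqrt ((1 - a ^+ 2) * (1 - b ^+ 2)) = 1 - a * b by lra.
  have : (1 - a ^+ 2) * (1 - b ^+ 2) = (1 - a * b) ^+ 2 by rewrite -Hs sqr_sqrtr.
  move=> E; apply/eqP; rewrite -subr_eq0 -sqrf_eq0; apply/eqP.
  by move: E; rewrite !expr2 => E; nra.
move=> <-.
rewrite (_ : (1 - a ^+ 2) * (1 - a ^+ 2) = (1 - a ^+ 2) ^+ 2); last by rewrite expr2.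
rewrite sqrtr_sqr ger0_norm; last by rewrite subr_ge0 expr_le1.
have -> : 1 + a * a + (1 - a ^+ 2) = 2 by rewrite expr2; ring.
by rewrite mulVf // pnatr_eq0.
Qed.

Lemma opt_le1_R (a b : R) : 0 <= a -> a <= 1 -> 0 <= b -> b <= 1 ->
  2^-1 * (1 + a * b + Num.sqrt ((1 - a ^+ 2) * (1 - b ^+ 2))) <= 1.
Proof.
move=> a0 a1 b0 b1.
have X0 : 0 <= (1 - a ^+ 2) * (1 - b ^+ 2) by apply: mulr_ge0; rewrite subr_ge0 expr_le1.
have : Num.sqrt ((1 - a ^+ 2) * (1 - b ^+ 2)) <= 1 - a * b.
  have ab1 : a * b <= 1 * 1 by apply: ler_pM.
  rewrite -(ger0_norm (_ : 0 <= 1 - a * b)); last by lra.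
  have h := sqr_ge0 (a - b).
  rewrite -sqrtr_sqr ler_wsqrtr //; move: h; rewrite !expr2 => h; nra.
lra.
Qed.

End S.

Section S.
Variable R : realType.
Local Notation C := (R[i]).
Implicit Types (u v w m n : 'cV[C]_2) (A B M : 'M[C]_2).

Lemma lift01 : lift ord0 ord0 = 1 :> 'I_2.
Proof. by apply: val_inj. Qed.

Definition J m : 'cV[C]_2 :=
  \matrix_(i < 2, j < 1) (if (i : nat) == 0%N then - (m 1 0)^* else (m 0 0)^*).

Lemma J_unit m : unit_vec m -> unit_vec (J m).
Proof.
rewrite /unit_vec !braketE !mxE /= rmorphN /= !conjCK => <-; ring.
Qed.

Lemma J_orth m : braket m (J m) = 0.
Proof. rewrite braketE !mxE /=; ring. Qed.

Definition W m n : 'M[C]_2 := \matrix_(i < 2, j < 2) (if (j : nat) == 0%N then m i 0 else n i 0).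

Definition col2 (a b : C) : 'cV[C]_2 := \matrix_(j < 2, k < 1) (if (j : nat) == 0%N then a else b).

Lemma W_adj_v m n v : (W m n)^t* *m v = col2 (braket m v) (braket n v).
Proof.
apply/matrixP => j k; rewrite ord1 !mxE !big_ord_recl big_ord0 addr0 !mxE lift01.
by case: j => [[|[|//]]] Hj /=; rewrite braketE.
Qed.

Lemma W_col m n (a b : C) : W m n *m col2 a b = a *: m + b *: n.
Proof.
apply/matrixP => i k; rewrite ord1 !mxE !big_ord_recl big_ord0 addr0 !mxE lift01 /=.
by rewrite mulrC [n i 0 * b]mulrC.
Qed.

Lemma W_unitary m n : unit_vec m -> unit_vec n -> braket m n = 0 ->
  (W m n)^t* *m W m n = 1%:M.
Proof.
move=> Hm Hn Hmn.
have Hnm : braket n m = 0 by rewrite -braketC Hmn conjC0.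
move: Hm Hn; rewrite /unit_vec => Hm Hn.
apply/matrixP => j k; rewrite !mxE !big_ord_recl big_ord0 addr0 !mxE lift01 /=.
case: j => [[|[|//]]] Hj; case: k => [[|[|//]]] Hk /=.
- by move: Hm; rewrite braketE.
- by move: Hmn; rewrite braketE.
- by move: Hnm; rewrite braketE.
- by move: Hn; rewrite braketE.
Qed.


Definition Umap m1 n1 m2 n2 : 'M[C]_2 := W m2 n2 *m (W m1 n1)^t*.

Lemma Umap_unitary m1 n1 m2 n2 :
  unit_vec m1 -> unit_vec n1 -> braket m1 n1 = 0 ->
  unit_vec m2 -> unit_vec n2 -> braket m2 n2 = 0 ->
  Umap m1 n1 m2 n2 *m (Umap m1 n1 m2 n2)^t* = 1%:M.
Proof.
move=> H1 H2 H3 H4 H5 H6.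
rewrite /Umap adjM trmxCK mulmxA -(mulmxA (W m2 n2)) W_unitary // mulmx1.
exact: mulmx1C (W_unitary H4 H5 H6).
Qed.

Lemma Umap_apply m1 n1 m2 n2 v :
  Umap m1 n1 m2 n2 *m v = braket m1 v *: m2 + braket n1 v *: n2.
Proof. by rewrite /Umap -mulmxA W_adj_v W_col. Qed.

Lemma rC_neq0 (r : R) : r != 0 -> r%:C != 0.
Proof. by rewrite fmorph_eq0. Qed.

Lemma decomp x y (a : R) : unit_vec x -> unit_vec y -> braket x y = a%:C -> 0 <= a ->
  exists m n, [/\ unit_vec m, unit_vec n, braket m n = 0,
     x = (Num.sqrt ((1 + a) / 2))%:C *: m + (Num.sqrt ((1 - a) / 2))%:C *: n &
     y = (Num.sqrt ((1 + a) / 2))%:C *: m - (Num.sqrt ((1 - a) / 2))%:C *: n].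
Proof.
rewrite /unit_vec => Hx Hy Hxy a0.
have Hyx : braket y x = a%:C by rewrite -braketC Hxy conjR.
set c := Num.sqrt ((1 + a) / 2); set s := Num.sqrt ((1 - a) / 2).
have Em : braket (x - y) (x - y) = (2 - 2 * a)%:C.
  rewrite !braketDl !braketDr !braketNl !braketNr Hx Hy Hxy Hyx.
  by rewrite rmorphB rmorphM rmorph_nat; ring.
have Ep : braket (x + y) (x + y) = (2 + 2 * a)%:C.
  rewrite !braketDl !braketDr Hx Hy Hxy Hyx.
  by rewrite rmorphD rmorphM rmorph_nat; ring.
have Epm : braket (x + y) (x - y) = 0.
  by rewrite !braketDl !braketDr !braketNr Hx Hy Hxy Hyx; ring.
have a1 : a <= 1.
  by have := braket_ge0 (x - y); rewrite Em ler0c => h; lra.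
have cp : 0 < c by rewrite sqrtr_gt0; lra.
have cc : c * c = (1 + a) / 2 by rewrite -expr2 sqr_sqrtr //; lra.
have ss : s * s = (1 - a) / 2 by rewrite -expr2 sqr_sqrtr //; lra.
have [s0|s0] := eqVneq s 0.
  have a_1 : a = 1 by move: ss; rewrite s0 mul0r => h; lra.
  have xy : x = y.
    apply/eqP; rewrite -subr_eq0; apply/eqP; apply: braket_eq0.
    by rewrite Em a_1 mulr1 subrr.
  have c1 : c = 1.
    by rewrite /c a_1 (_ : (1 + 1) / 2 = (1 : R)) ?sqrtr1 //; field.
  exists x, (J x); split => //.
  - exact: J_unit.
  - exact: J_orth.
  - by rewrite s0 c1 scale1r scale0r addr0.
  - by rewrite s0 c1 scale1r scale0r subr0.
have c0 : c != 0 by rewrite gt_eqF.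
exists (((2 * c)^-1)%:C *: (x + y)), (((2 * s)^-1)%:C *: (x - y)); split.
- rewrite /unit_vec braketZl braketZr Ep conjR -!rmorphM.
  have -> : 2 + 2 * a = 2 * c * (2 * c) 
    by rewrite (_ : 2 * c * (2 * c) = 4 * (c * c)); [rewrite cc; field | ring].
  by rewrite (_ : (2 * c)^-1 * ((2 * c)^-1 * (2 * c * (2 * c))) = 1) //; field.
- rewrite /unit_vec braketZl braketZr Em conjR -!rmorphM.
  have -> : 2 - 2 * a = 2 * s * (2 * s) 
    by rewrite (_ : 2 * s * (2 * s) = 4 * (s * s)); [rewrite ss; field | ring].
  by rewrite (_ : (2 * s)^-1 * ((2 * s)^-1 * (2 * s * (2 * s))) = 1) //; field.
- by rewrite braketZl braketZr Epm !mulr0.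
- apply/matrixP => i j; rewrite !mxE !fmorphV !rmorphM !rmorph_nat.
  by field; rewrite ?rC_neq0.
- apply/matrixP => i j; rewrite !mxE !fmorphV !rmorphM !rmorph_nat.
  by field; rewrite ?rC_neq0.
Qed.

End S.

Section S.
Variable R : realType.
Local Notation C := (R[i]).
Implicit Types (u v w m n : 'cV[C]_2) (A B M : 'M[C]_2).

Lemma phase (z : C) : exists w : C, w * w^* = 1 /\ w * z = `|z|.
Proof.
have [->|z0] := eqVneq z 0.
  by exists 1; rewrite conjC1 mulr1 mul1r normr0.
have nz : `|z| != 0 by rewrite normr_eq0.
exists (z^* / `|z|); split.
  rewrite rmorphM /= conjCK fmorphV /= conj_normC mulrACA.
  by rewrite -normCKC expr2; field.
by rewrite mulrAC -normCKC expr2; field.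
Qed.

Lemma norm_phase (w : C) : w * w^* = 1 -> `|w| = 1.
Proof.
move=> h; apply/eqP; rewrite -(@sqrp_eq1 _ `|w|) ?normr_ge0 //.
by rewrite normCK h.
Qed.

Lemma unit_phase (w : C) u : w * w^* = 1 -> unit_vec u -> unit_vec (w *: u).
Proof. by rewrite /unit_vec braketZl braketZr => h ->; rewrite mulr1 mulrC. Qed.

Lemma ketbra_phase (w : C) u : w * w^* = 1 -> ketbra (w *: u) = ketbra u.
Proof. by move=> h; rewrite ketbraZ h scale1r. Qed.

Lemma br_comb m n (al be ga de : C) : unit_vec m -> unit_vec n -> braket m n = 0 ->
  braket (al *: m + be *: n) (ga *: m + de *: n) = al^* * ga + be^* * de.
Proof.
rewrite /unit_vec => Hm Hn Hmn.
have Hnm : braket n m = 0 by rewrite -braketC Hmn conjC0.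
rewrite !braketDl !braketDr !braketZl !braketZr Hm Hn Hmn Hnm; ring.
Qed.

Lemma Umap_comb m1 n1 m2 n2 (al be : C) : unit_vec m1 -> unit_vec n1 -> braket m1 n1 = 0 ->
  Umap m1 n1 m2 n2 *m (al *: m1 + be *: n1) = al *: m2 + be *: n2.
Proof.
rewrite /unit_vec => Hm Hn Hmn.
have Hnm : braket n1 m1 = 0 by rewrite -braketC Hmn conjC0.
rewrite Umap_apply !braketDr !braketZr Hm Hn Hmn Hnm.
by rewrite !mulr0 !mulr1 addr0 add0r.
Qed.

Lemma subZ m n (s : C) : m - s *: n = m + (- s) *: n.
Proof. by rewrite scaleNr. Qed.


Lemma construct (psi phi e f : 'cV[C]_2) :
  unit_vec psi -> unit_vec phi -> unit_vec e -> unit_vec f ->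
  let a := complex.Re `|braket psi phi| in let b := complex.Re `|braket e f| in
  let k := Num.sqrt ((1 + a) / 2) * Num.sqrt ((1 + b) / 2) +
           Num.sqrt ((1 - a) / 2) * Num.sqrt ((1 - b) / 2) in
  exists U : 'M[C]_2, [/\ U *m U^t* = 1%:M,
    `|braket e (U *m psi)| = k%:C, `|braket f (U *m phi)| = k%:C &
    (a = b -> ketbra (U *m psi) = ketbra e /\ ketbra (U *m phi) = ketbra f)].
Proof.
move=> Up Uph Ue Uf a b.
have [w1 [w1c w1z]] := phase (braket psi phi).
have [w2 [w2c w2z]] := phase (braket e f).
have Uph' := unit_phase w1c Uph.
have Uf' := unit_phase w2c Uf.
have a0 : 0 <= a by apply: Re_norm_ge0.
have b0 : 0 <= b by apply: Re_norm_ge0.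
have Hpp : braket psi (w1 *: phi) = a%:C by rewrite braketZr w1z -normRe.
have Hef : braket e (w2 *: f) = b%:C by rewrite braketZr w2z -normRe.
have [m1 [n1 [Hm1 Hn1 Hmn1 Epsi Ephi]]] := decomp Up Uph' Hpp a0.
have [m2 [n2 [Hm2 Hn2 Hmn2 Ee Ef]]] := decomp Ue Uf' Hef b0.
set c1 := Num.sqrt ((1 + a) / 2) in Epsi Ephi *.
set s1 := Num.sqrt ((1 - a) / 2) in Epsi Ephi *.
set c2 := Num.sqrt ((1 + b) / 2) in Ee Ef *.
set s2 := Num.sqrt ((1 - b) / 2) in Ee Ef *.
move=> k.
have k0 : 0 <= k by rewrite /k addr_ge0 // mulr_ge0 // sqrtr_ge0.
set U := Umap m1 n1 m2 n2.
have UU : U *m U^t* = 1%:M by apply: Umap_unitary.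
have Upsi : U *m psi = c1%:C *: m2 + s1%:C *: n2.
  by rewrite Epsi Umap_comb.
have Uphi' : U *m (w1 *: phi) = c1%:C *: m2 + (- s1%:C) *: n2.
  by rewrite Ephi subZ Umap_comb.
have Ef' : w2 *: f = c2%:C *: m2 + (- s2%:C) *: n2 by rewrite Ef subZ.
exists U; split => //.
- rewrite Upsi Ee br_comb // !conjR -!rmorphM -rmorphD.
  by rewrite ger0_norm ?ler0c // /k mulrC [s2 * s1]mulrC.
- have : `|braket (w2 *: f) (U *m (w1 *: phi))| = k%:C.
    rewrite Uphi' Ef' br_comb // rmorphN /= !conjR mulrNN -!rmorphM -rmorphD.
    by rewrite ger0_norm ?ler0c // /k mulrC [s2 * s1]mulrC.
  rewrite -scalemxAr braketZl braketZr !normrM norm_conjC (norm_phase w1c) (norm_phase w2c).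
  by rewrite !mul1r.
- move=> ab.
  have c12 : c1 = c2 by rewrite /c1 /c2 ab.
  have s12 : s1 = s2 by rewrite /s1 /s2 ab.
  split; first by rewrite Upsi Ee c12 s12.
  rewrite -(ketbra_phase (U *m phi) w1c) scalemxAr Uphi' -(ketbra_phase f w2c) Ef'.
  by rewrite c12 s12.
Qed.

End S.

Section S.
Variable R : realType.
Local Notation C := (R[i]).

Lemma k_sq (a b : R) : 0 <= a -> a <= 1 -> 0 <= b -> b <= 1 ->
  (Num.sqrt ((1 + a) / 2) * Num.sqrt ((1 + b) / 2) +
   Num.sqrt ((1 - a) / 2) * Num.sqrt ((1 - b) / 2)) ^+ 2 =
  2^-1 * (1 + a * b + Num.sqrt ((1 - a ^+ 2) * (1 - b ^+ 2))).
Proof.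
move=> a0 a1 b0 b1.
set c1 := Num.sqrt ((1 + a) / 2); set s1 := Num.sqrt ((1 - a) / 2).
set c2 := Num.sqrt ((1 + b) / 2); set s2 := Num.sqrt ((1 - b) / 2).
set q := Num.sqrt ((1 - a ^+ 2) * (1 - b ^+ 2)).
have hc1 : c1 ^+ 2 = (1 + a) / 2 by rewrite sqr_sqrtr //; lra.
have hs1 : s1 ^+ 2 = (1 - a) / 2 by rewrite sqr_sqrtr //; lra.
have hc2 : c2 ^+ 2 = (1 + b) / 2 by rewrite sqr_sqrtr //; lra.
have hs2 : s2 ^+ 2 = (1 - b) / 2 by rewrite sqr_sqrtr //; lra.
have hq : q ^+ 2 = (1 - a ^+ 2) * (1 - b ^+ 2).
  by rewrite sqr_sqrtr // mulr_ge0 // subr_ge0 expr_le1.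
have P0 : 0 <= c1 * s1 * c2 * s2 by rewrite !mulr_ge0 // sqrtr_ge0.
have q0 : 0 <= q / 4 by rewrite mulr_ge0 ?sqrtr_ge0 // invr_ge0.
have EP : c1 * s1 * c2 * s2 = q / 4.
  apply/eqP; rewrite -(@eqrXn2 _ 2) //.
  rewrite !exprMn hc1 hs1 hc2 hs2 hq; apply/eqP; field.
  done.
have E : (c1 * c2 + s1 * s2) ^+ 2 = c1 ^+ 2 * c2 ^+ 2 + s1 ^+ 2 * s2 ^+ 2 + 2 * (c1 * s1 * c2 * s2).
  by ring.
rewrite E hc1 hs1 hc2 hs2 EP; field.
done.
Qed.


Lemma half2 (x : C) : 2^-1 * x + 2^-1 * x = x.
Proof. by field. Qed.

Lemma chan_of (U : 'M[C]_2) : U *m U^t* = 1%:M ->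
  random_unitary_channel (fun A => U *m A *m U^t*).
Proof.
move=> UU; exists 1%N, (fun _ => 1), (fun _ => U); split.
- by move=> _; apply: ler01.
- by rewrite big_ord1.
- by move=> _; apply/unitarymxP.
- by move=> A; rewrite big_ord1 scale1r.
Qed.

End S.

Theorem corollary2 (R : realType) (psi phi e f : 'cV[R[i]]_2) :
  unit_vec psi -> unit_vec phi -> unit_vec e -> unit_vec f ->
  [/\ (* the maximum over R is attained and equals the closed form *)
      (exists Psi, random_unitary_channel Psi /\
                   success Psi psi phi e f = opt_value psi phi e f),
      (forall Psi, random_unitary_channel Psi ->
                   success Psi psi phi e f <= opt_value psi phi e f),
      (opt_value psi phi e f = 1 <-> `|braket psi phi| = `|braket e f|) &
      (jointly_convertible (@random_unitary_channel R) psi phi e f <->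
         `|braket psi phi| = `|braket e f|)].
Proof.
move=> Up Uph Ue Uf.
have [a0 a1 b0 b1 Eopt] := opt_R Up Uph Ue Uf.
have [U [UU HU1 HU2 Hab]] := construct Up Uph Ue Uf.
move: a0 a1 b0 b1 Eopt HU1 HU2 Hab.
set a := complex.Re `|braket psi phi|; set b := complex.Re `|braket e f|.
move=> a0 a1 b0 b1 Eopt HU1 HU2 Hab.
have Enorm : `|braket psi phi| = `|braket e f| <-> a = b.
  rewrite (normRe (braket psi phi)) (normRe (braket e f)) -/a -/b.
  by split => [[]|->].
have Cpart : opt_value psi phi e f = 1 <-> a = b.
  rewrite Eopt -(opt_eq1_R a0 a1 b0 b1).
  by split => [[]|->].
have Apart := fun Psi => @chan_bound R Psi psi phi e f Up Uph Ue Uf.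
split.
- exists (fun A => U *m A *m U^t*); split; first exact: chan_of.
  rewrite /success !conj_k !expect_k HU1 HU2 half2 Eopt -(k_sq a0 a1 b0 b1).
  by rewrite rmorphXn.
- exact: Apart.
- by rewrite Cpart Enorm.
- rewrite Enorm; split.
    move=> [Psi [HPsi [H1 H2]]].
    have S1 : success Psi psi phi e f = 1.
      rewrite /success H1 H2 !expect_k.
      by move: Ue Uf; rewrite /unit_vec => -> ->; rewrite normr1 expr1n half2.
    have Hge := opt_le1_R a0 a1 b0 b1.
    apply/Cpart; apply/eqP; rewrite eq_le; apply/andP; split.
      by rewrite Eopt -(rmorph1 (real_complex R)) lecR.
    by rewrite -S1; apply: Apart.
  move=> ab; have [H1 H2] := Hab ab.
  exists (fun A => U *m A *m U^t*); split; first exact: chan_of.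
  by rewrite !conj_k H1 H2.
Qed.
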